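(* Suppose an affine plane of order $k-1$ exists, and let $H_1,\ldots,H_k$ be graphs with $n(H_i)<k$ for each $i$. Then $f(H_1,\ldots,H_k)\le (k-1)^2$.
   Context: All graphs are finite and simple; $n(H)$ is the number of vertices of $H$. A graph $G$ is $(H_1,\ldots,H_k)$-full if every vertex of $G$ belongs to an induced subgraph of $G$ isomorphic to $H_i$, for each $i$. $f(H_1,\ldots,H_k)$ denotes the minimum order of an $(H_1,\ldots,H_k)$-full graph. An affine plane of order $q$ is a resolvable Steiner system $S(q^2,q,2)$: a $q$-uniform hypergraph on $q^2$ vertices in which every pair of vertices lies in exactly one edge, whose edge set can be partitioned into perfect matchings. *)

(* Defs.v *)
From mathcomp Require Import all_boot.
Set Implicit Arguments. Unset Strict Implicit. Unset Printing Implicit Defensive.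

Record sgraph := SGraph {
  svert :> finType;
  sadj : rel svert;
  sadj_sym : symmetric sadj;
  sadj_irr : irreflexive sadj }.

Definition nverts (G : sgraph) : nat := #|svert G|.

Definition in_induced_copy (H G : sgraph) (v : svert G) : Prop :=
  exists f : svert H -> svert G,
    [/\ injective f,
        (forall x y : svert H, @sadj G (f x) (f y) = @sadj H x y)
      & v \in codom f].

Definition full (k : nat) (Hs : 'I_k -> sgraph) (G : sgraph) : Prop :=
  forall (i : 'I_k) (v : svert G), @in_induced_copy (Hs i) G v.

(* An affine plane of nverts q on the point set T with block (line) set B:
   a resolvable Steiner system S(q^2, q, 2). *)
Definition affine_plane (q : nat) (T : finType) (B : {set {set T}}) : Prop :=
  [/\ #|T| = q ^ 2,
      (forall b, b \in B -> #|b| = q),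
      (forall x y : T, x != y -> #|[set b in B | (x \in b) && (y \in b)]| = 1)
    & exists P : {set {set {set T}}},
        partition P B /\
        (forall M, M \in P -> trivIset M /\ cover M = [set: T])].

(* Main.v *)
Require Import Defs.
From mathcomp Require Import all_boot zify.
Set Implicit Arguments. Unset Strict Implicit. Unset Printing Implicit Defensive.

Definition gadj (T : finType) k (Hs : 'I_k -> sgraph) (cls : 'I_k -> {set {set T}})
  (phi : forall i, T -> Hs i) : rel T :=
  fun x y => [exists i, (pblock (cls i) x == pblock (cls i) y) && sadj (phi i x) (phi i y)].

Lemma gadj_sym T k Hs cls phi : symmetric (@gadj T k Hs cls phi).
Proof.
move=> x y; apply/existsP/existsP => -[i /andP[e a]]; exists i;
  by rewrite eq_sym e sadj_sym.
Qed.

Lemma gadj_irr T k Hs cls phi : irreflexive (@gadj T k Hs cls phi).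
Proof.
move=> x; apply/existsP => -[i /andP[_ a]]; by rewrite sadj_irr in a.
Qed.

Definition gG T k Hs cls phi := SGraph (@gadj_sym T k Hs cls phi) (@gadj_irr T k Hs cls phi).

Lemma key (T : finType) k (Hs : 'I_k -> sgraph) (B : {set {set T}}) P cls phi :
  (forall x y : T, x != y -> #|[set b in B | (x \in b) && (y \in b)]| = 1) ->
  partition P B -> (forall M, M \in P -> trivIset M /\ cover M = [set: T]) ->
  injective cls -> (forall i, cls i \in P) ->
  (forall i b, b \in cls i -> forall h, exists2 x, x \in b & phi i x = h) ->
  full Hs (@gG T k Hs cls phi).
Proof.
move=> Hpair /and3P[/eqP cPB tP _] HPM injc clsP surj i v.
have [tM _] := HPM _ (clsP i).
have covM : forall j (x : T), x \in cover (cls j).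
  by move=> j x; have [_ ->] := HPM _ (clsP j); rewrite inE.
set b := pblock (cls i) v.
have bM : b \in cls i by apply: pblock_mem.
have vb : v \in b by rewrite mem_pblock.
pose s (h : Hs i) : T :=
  if h == phi i v then v else odflt v [pick x in b | phi i x == h].
have sP : forall h, s h \in b /\ phi i (s h) = h.
  move=> h; rewrite /s; case: eqP => [->//|_].
  case: pickP => [x /andP[xb /eqP]//|/= H].
  have [x xb ex] := surj i b bM h.
  by have := H x; rewrite xb ex eqxx.
exists s; split.
- by move=> x y e; rewrite -(proj2 (sP x)) -(proj2 (sP y)) e.
- move=> x y /=; rewrite /gadj.
  apply/existsP/idP => [[j /andP[e a]]|a]; last first.
    exists i; rewrite (proj2 (sP x)) (proj2 (sP y)) a andbT.
    by rewrite (def_pblock tM bM (proj1 (sP x))) (def_pblock tM bM (proj1 (sP y))).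
  have [ji|ne] := eqVneq j i; first by subst j; rewrite (proj2 (sP x)) (proj2 (sP y)) in a.
  exfalso.
  have nxy : s x != s y by apply/eqP => exy; rewrite exy sadj_irr in a.
  set c := pblock (cls j) (s x).
  have cM : c \in cls j by apply: pblock_mem.
  have xc : s x \in c by rewrite mem_pblock.
  have yc : s y \in c by rewrite /c (eqP e) mem_pblock.
  have inB : forall l d, d \in cls l -> d \in B.
    by move=> l d dl; rewrite -cPB; apply/bigcupP; exists (cls l).
  have /eqP/cards1P[d Hd] := Hpair _ _ nxy.
  have : b \in [set d] by rewrite -Hd inE (inB _ _ bM) (proj1 (sP x)) (proj1 (sP y)).
  have : c \in [set d] by rewrite -Hd inE (inB _ _ cM) xc yc.
  rewrite !inE => /eqP cd /eqP bd.
  have bc : b = c by rewrite cd bd.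
  have /trivIsetP/(_ _ _ (clsP i) (clsP j)) := tP.
  have -> : cls i != cls j by apply: contra ne => /eqP /injc ->.
  move=> /(_ isT) /pred0P /(_ b) /=; by rewrite bM bc cM.
- by apply/codomP; exists (phi i v); rewrite /s eqxx.
Qed.

Definition phi (T H : finType) (h0 : H) (M : {set {set T}}) (x : T) : H :=
  nth h0 (enum H) (index x (enum (pblock M x)) %% #|H|).

Lemma phi_surj (T H : finType) (h0 : H) (M : {set {set T}}) b :
  trivIset M -> b \in M -> #|H| <= #|b| ->
  forall h, exists2 x, x \in b & phi h0 M x = h.
Proof.
move=> tM bM Hle h.
have jH : index h (enum H) < #|H| by rewrite cardE index_mem mem_enum.
have /card_gt0P[x0 _] : 0 < #|b| by apply: leq_trans Hle; apply: leq_ltn_trans jH.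
have jb : index h (enum H) < size (enum b) by rewrite -cardE; apply: leq_trans Hle.
set x := nth x0 (enum b) (index h (enum H)).
have xb : x \in b by rewrite -mem_enum mem_nth.
exists x => //.
rewrite /phi (def_pblock tM bM xb) index_uniq ?enum_uniq // modn_small //.
by rewrite nth_index ?mem_enum.
Qed.

Lemma and_l (a b : bool) : a && b -> a. Proof. by case/andP. Qed.

Lemma count_classes (T : finType) q (B : {set {set T}}) P :
  1 < q -> #|T| = q ^ 2 -> (forall b, b \in B -> #|b| = q) ->
  (forall x y : T, x != y -> #|[set b in B | (x \in b) && (y \in b)]| = 1) ->
  partition P B -> (forall M, M \in P -> trivIset M /\ cover M = [set: T]) ->
  q.+1 <= #|P|.
Proof.
move=> q1 HT Hb Hpair /and3P[/eqP cPB tP _] HPM.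
have /card_gt0P[x0 _] : 0 < #|T| by rewrite HT expn_gt0; lia.
set L0 := [set b in B | x0 \in b].
set P' := [set b :\ x0 | b in L0].
have sub : [set~ x0] \subset cover P'.
  apply/subsetP => y; rewrite !inE => ny.
  have : 0 < #|[set b in B | (y \in b) && (x0 \in b)]| by rewrite Hpair.
  case/card_gt0P => b; rewrite !inE => /and3P[bB yb xb].
  apply/bigcupP; exists (b :\ x0); last by rewrite !inE ny.
  by apply/imsetP; exists b => //; rewrite inE bB.
have c1 := subset_leq_card sub.
have c2 := (leq_card_cover P').1.
have c3 : \sum_(A in P') #|A| = \sum_(A in P') q.-1.
  apply: eq_bigr => A /imsetP[b]; rewrite inE => /andP[bB xb] ->.
  by have := cardsD1 x0 b; rewrite xb Hb //; lia.
have c4 : #|P'| <= #|L0| by apply: leq_imset_card.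
rewrite c3 sum_nat_const cardsC1 HT in c1 c2.
have c5 : q ^ 2 - 1 <= #|L0| * q.-1.
  have : q ^ 2 - 1 <= #|P'| * q.-1.
    have := leq_trans c1 c2; lia.
  move=> h; apply: leq_trans h _; rewrite leq_mul2r; by rewrite c4 orbT.
have c6 : q.+1 <= #|L0|.
  have e : q ^ 2 - 1 = q.+1 * q.-1 by rewrite expnS expn1; lia.
  by rewrite e leq_mul2r in c5; case/orP: c5 => //; lia.
apply: leq_trans c6 _.
have inj : {in L0 &, injective (pblock P)}.
  move=> b1 b2; rewrite !inE => /andP[b1B x1] /andP[b2B x2] e.
  have b1c : b1 \in cover P by rewrite cPB.
  have b2c : b2 \in cover P by rewrite cPB.
  have m1 := pblock_mem b1c. have m2 := pblock_mem b2c.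
  have i1 : b1 \in pblock P b1 by rewrite mem_pblock.
  have i2 : b2 \in pblock P b1 by rewrite e mem_pblock.
  have [tM _] := HPM _ m1.
  apply/eqP; apply: contraT => ne.
  move/trivIsetP: tM => /(_ _ _ i1 i2 ne) /pred0P /(_ x0) /=.
  by rewrite x1 x2.
rewrite -(card_in_imset inj); apply: subset_leq_card.
apply/subsetP => M /imsetP[b]; rewrite inE => /andP[bB _] ->.
by apply: pblock_mem; rewrite cPB.
Qed.

Definition emptyG (T : finType) : sgraph :=
  @SGraph T [rel x y | false] (fun _ _ => erefl) (fun _ => erefl).

Theorem corollary2p3 (k : nat) (Hs : 'I_k -> sgraph) :
  0 < k ->
  (exists (T : finType) (B : {set {set T}}), affine_plane (k - 1) B) ->
  (forall i : 'I_k, 0 < nverts (Hs i) < k) ->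
  exists G : sgraph, [/\ 0 < nverts G, nverts G <= (k - 1) ^ 2 & full Hs G].
Proof.
move=> k0 [T [B [HT Hb Hpair [P [HPpart HPM]]]]] Hn.
have [k1|k1] := leqP k 1.
  by have := Hn (Ordinal k0); rewrite /nverts; lia.
have [k2|k3] := leqP k 2.
  have ek : k - 1 = 1 by lia.
  rewrite ek in HT *.
  exists (emptyG T); split; rewrite /nverts /= ?HT //.
  move=> i v; exists (fun _ => v); split.
  - move=> x y _; have := Hn i; rewrite /nverts => /andP[_ h].
    have /card_le1_eqP : #|Hs i| <= 1 by lia.
    move=> H; exact: (H _ _ isT isT).
  - move=> x y /=; have := Hn i; rewrite /nverts => /andP[_ h].
    have /card_le1_eqP : #|Hs i| <= 1 by lia.
    move=> /(_ x y) -> //; by rewrite sadj_irr.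
  - by apply/codomP; exists (enum_val (Ordinal (and_l (Hn i)))).
have cP : k <= #|P|.
  have := count_classes (q := k - 1) _ HT Hb Hpair HPpart HPM.
  have -> : (k - 1).+1 = k by lia.
  by apply; lia.
pose cls (i : 'I_k) := @enum_val _ (mem P) (widen_ord cP i).
pose h0 (i : 'I_k) : Hs i := enum_val (Ordinal (and_l (Hn i))).
pose phi' (i : 'I_k) := phi (h0 i) (cls i).
move: (HPpart) => /and3P[/eqP cPB _ _].
exists (gG cls phi'); split; rewrite /nverts /= ?HT //.
  by rewrite expn_gt0; lia.
apply: (key Hpair HPpart HPM).
- by move=> i j /enum_val_inj /(congr1 val) /= /val_inj.
- by move=> i; apply: enum_valP.
- move=> i b bc h.
  have clsP : cls i \in P by apply: enum_valP.
  have [tM _] := HPM _ clsP.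
  apply: phi_surj => //.
  have bB : b \in B by rewrite -cPB; apply/bigcupP; exists (cls i).
  rewrite Hb //; have := Hn i; rewrite /nverts; lia.
Qed.
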